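(* Let $Q\in\partial D$ and let $v$ be a nonnegative harmonic function with respect to $X^{D}$ with Martin measure $\nu$. Suppose that $\mu$ is a nonnegative finite measure on $\partial D$. If $\displaystyle\lim_{x\rightarrow Q}\frac{\delta_{D}(x)}{v(x)}=0$, then for every $\varepsilon>0$ we have $$ \lim_{x\rightarrow Q}\frac{\int_{\partial D \cap \{|Q-z|\geq \varepsilon\}}M_{D}(x,z)\mu(dz)}{v(x)}=0. $$ If instead we only assume $\displaystyle\lim_{x\rightarrow Q}\frac{\delta_{D}(x)}{v(x)}=0$ as $x\to Q$ nontangentially, then for every $\varepsilon>0$ the conclusion $\displaystyle\lim_{x\rightarrow Q}\frac{\int_{\partial D \cap \{|Q-z|\geq \varepsilon\}}M_{D}(x,z)\mu(dz)}{v(x)}=0$ holds with the limit taken as $x\to Q$ nontangentially.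
   Context: Let $d\geq 2$ and let $X_t=W(S_t)$ be a subordinate Brownian motion, where $W$ is a $d$-dimensional Brownian motion and $S$ is an independent subordinator with Laplace exponent $\phi(\lambda)=\lambda+\int_{(0,\infty)}(1-e^{-\lambda t})\mu(t)\,dt$, where $\phi$ is a complete Bernstein function (the Lévy measure has a completely monotone density $\mu(t)$) and for every $K>0$ there is $c=c(K)>1$ with $\mu(r)\le c\,\mu(2r)$ for $r\in(0,K)$. Let $D\subset\mathbb{R}^d$ be a bounded $C^{1,1}$ open set with characteristics $(r_0,\Lambda_0)$, $X^D$ the process $X$ killed upon exiting $D$, $G_D$ its Green function, and $\delta_D(x)$ the Euclidean distance from $x$ to $D^c$. A function $u:D\to[0,\infty)$ is harmonic with respect to $X^D$ if $u(x)=\mathbb{E}_x[u(X^D_{\tau_B})]$ for every $x\in B$ and every open $B$ with compact closure in $D$ (with $u$ set to $0$ at the cemetery). Fix $x_0\in D$; the Martin kernel is $M_D(x,z)=\lim_{y\to z}G_D(x,y)/G_D(x_0,y)$ for $z\in\partial D$, and every nonnegative harmonic $v$ with respect to $X^D$ has the form $v(x)=\int_{\partial D}M_D(x,z)\nu(dz)$ for a unique finite measure $\nu$ on $\partial D$ (its Martin measure). The Martin kernel satisfies $M_D(x,z)\asymp \delta_D(x)/|x-z|^d$ for $x\in D$, $z\in\partial D$. For $Q\in\partial D$ and $\beta>1$ let $A_Q^\beta=\{x\in D:\delta_D(x)<r_0,\ |x-Q|<\beta\delta_D(x)\}$; $x\to Q$ nontangentially means $x\to Q$ with $x\in A_Q^\beta$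 for some $\beta>1$. *)

(* Defs.v *)
From HB Require Import structures.
From mathcomp Require Import all_boot all_order all_algebra.
From mathcomp Require Import all_classical all_reals all_analysis.
Set Implicit Arguments. Unset Strict Implicit. Unset Printing Implicit Defensive.
Import Order.TTheory GRing.Theory Num.Theory.
Import numFieldNormedType.Exports.
Local Open Scope classical_set_scope.
Local Open Scope ring_scope.

Section Defs.
Variables (R : realType) (d : nat).
Notation Vec := 'rV[R]_d.

Definition edot (x y : Vec) : R := \sum_(i < d) x 0 i * y 0 i.
Definition enorm (x : Vec) : R := Num.sqrt (edot x x).

Definition BorelRd := g_sigma_algebraType (@open Vec).

Definition bdry (D : set Vec) : set Vec := closure D `\` interior D.

Definition delta (D : set Vec) (x : Vec) : R :=
  inf [set enorm (x - y) | y in ~` D].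

Definition bounded_set (D : set Vec) : Prop :=
  exists M : R, forall x, D x -> enorm x <= M.

(** Bounded C^{1,1} open set with characteristics (r0, Lambda0):
    for every Q in the boundary there is an orthonormal coordinate system
    centred at Q -- given by a unit vector e (the last coordinate axis) --
    and a function phi of the first d-1 coordinates (i.e. phi(y + t e) = phi(y)),
    of class C^{1,1} with phi(0)=0, grad phi(0)=0, |grad phi| <= Lambda0,
    |grad phi(y) - grad phi(z)| <= Lambda0 |y - z|, such that
    B(Q,r0) /\ D = { y : |y - Q| < r0, <y - Q, e> > phi(y - Q) }. *)
Definition C11_open_set (D : set Vec) (r0 L0 : R) : Prop :=
  open D /\ bounded_set D /\ 0 < r0 /\ 0 < L0 /\
   forall Q, bdry D Q ->
   exists (e : Vec) (phi : Vec -> R) (g : Vec -> Vec),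
     enorm e = 1 /\
     (forall y t, phi (y + t *: e) = phi y) /\
     (forall y w, is_derive y w phi (edot (g y) w)) /\
     phi 0 = 0 /\ g 0 = 0 /\
     (forall y, enorm (g y) <= L0) /\
     (forall y z, enorm (g y - g z) <= L0 * enorm (y - z)) /\
     (forall y, (D y /\ enorm (y - Q) < r0) <->
                (enorm (y - Q) < r0 /\ phi (y - Q) < edot (y - Q) e)).

Definition ntregion (D : set Vec) (r0 : R) (Q : Vec) (beta : R) : set Vec :=
  [set x | D x /\ delta D x < r0 /\ enorm (x - Q) < beta * delta D x].

Definition martin_estimate (D : set Vec) (M : Vec -> Vec -> R) : Prop :=
  exists c : R, 1 <= c /\
    forall x z, D x -> bdry D z ->
      c^-1 * (delta D x / enorm (x - z) ^+ d) <= M x z /\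
      M x z <= c * (delta D x / enorm (x - z) ^+ d).

End Defs.

(* Main.v *)
Require Import Defs.
From HB Require Import structures.
From mathcomp Require Import all_boot all_order all_algebra.
From mathcomp Require Import all_classical all_reals all_analysis.
From mathcomp Require Import ring lra.
Import Order.TTheory GRing.Theory Num.Theory.
Import numFieldNormedType.Exports.
Local Open Scope classical_set_scope.
Local Open Scope ring_scope.
Section N.
Variables (R : realType) (d : nat).
Lemma edot_ge0 (w : 'rV[R]_d) : 0 <= edot w w.
Proof. by rewrite /edot; apply: sumr_ge0 => i _; rewrite -expr2 sqr_ge0. Qed.

Lemma coord_le (w : 'rV[R]_d) (i : 'I_d) : `|w 0 i| <= `|w|.
Proof.
rewrite [leRHS]/Num.Def.normr /= mx_normrE.
by apply/bigmax_geP; right; exists (0, i).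
Qed.

Lemma norm_le_enorm (w : 'rV[R]_d) : `|w| <= enorm w.
Proof.
rewrite [leLHS]/Num.Def.normr /= mx_normrE.
apply: bigmax_le; first exact: sqrtr_ge0.
move=> [i j] _ /=; rewrite (ord1 i) -sqrtr_sqr ler_sqrt ?edot_ge0 //.
rewrite /edot (bigD1 j) //= -expr2 lerDl.
by apply: sumr_ge0 => k _; rewrite -expr2 sqr_ge0.
Qed.

Lemma enorm_le (w : 'rV[R]_d) : enorm w <= d%:R * `|w|.
Proof.
rewrite /enorm -[X in _ <= X]ger0_norm ?mulr_ge0 // -sqrtr_sqr ler_sqrt ?sqr_ge0 //.
rewrite /edot exprMn.
apply: (@le_trans _ _ (\sum_(i < d) `|w|^+2)).
  apply: ler_sum => i _; rewrite -expr2 -real_normK ?num_real //.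
  by rewrite lerXn2r ?nnegrE ?coord_le.
rewrite sumr_const card_ord -[leLHS]mulr_natl.
have h : (d%:R : R) <= d%:R ^+ 2.
  by rewrite -natrX ler_nat; case: (d) => // n; rewrite leq_pmull.
have h2 : 0 <= `|w| ^+ 2 by exact: sqr_ge0.
have := ler_wpM2r h2 h; exact.
Qed.
End N.
Section I.
Context (dd : measure_display) (T : measurableType dd) (R : realType).

Lemma int_le (mu : {measure set T -> \bar R}) (A : set T) (f g : T -> \bar R) :
  (forall x, A x -> (0 <= f x)%E) -> (forall x, A x -> (f x <= g x)%E) ->
  (\int[mu]_(x in A) f x <= \int[mu]_(x in A) g x)%E.
Proof.
move=> f0 fg.
have g0 : forall x, A x -> (0 <= g x)%E by move=> x Ax; exact: le_trans (f0 _ Ax) (fg _ Ax).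
rewrite (ge0_integralE _ f0) (ge0_integralE _ g0).
apply: ereal_sup_le => _ [h hf <-]; exists h => // x.
apply: le_trans (hf x) _; rewrite /patch; case: ifP => // /set_mem Ax.
exact: fg.
Qed.

Lemma Rint_bound (mu : {finite_measure set T -> \bar R}) (A : set T) (f : T -> R) (K : R) :
  0 <= K -> (forall z, A z -> 0 <= f z <= K) ->
  0 <= Rintegral mu A f <= K * fine (mu setT).
Proof.
move=> K0 fK.
have I0 : (0 <= \int[mu]_(x in A) (f x)%:E)%E.
  by apply: integral_ge0 => z /fK /andP[]; rewrite lee_fin.
have IK : (\int[mu]_(x in A) (f x)%:E <= K%:E * mu setT)%E.
  rewrite integral_mkcond -(integral_cst mu measurableT).
  apply: int_le => x _; rewrite /patch; case: ifP => // /set_mem Ax.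
  - by have /andP[] := fK _ Ax; rewrite lee_fin.
  - by have /andP[] := fK _ Ax; rewrite /= lee_fin.
have muf : mu setT \is a fin_num by exact: fin_num_measure.
rewrite /Rintegral fine_ge0 //=.
have -> : K * fine (mu setT) = fine (K%:E * mu setT) by rewrite fineM.
apply: fine_le => //; last by rewrite fin_numM.
rewrite fin_numElt (lt_le_trans _ I0) ?ltNyr //=.
by apply: le_lt_trans IK _; rewrite ltey_eq fin_numM.
Qed.
End I.

Lemma near_ball (R : realType) (d:nat) (S : set 'rV[R]_d) (Q : 'rV[R]_d) (r : R) (r0 : 0 < r) :
  \forall x \near within S (nbhs Q), S x /\ `|Q - x| < r.
Proof.
near=> x; split.
  near: x; exact: near_withinT.
near: x; apply: cvgr_dist_lt => //; apply: cvg_within_filter; exact: cvg_id.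
Unshelve. all: by end_near. Qed.

Lemma key (R : realType) (d : nat) (hd : (2 <= d)%N)
  (D : set 'rV[R]_d) (MD : 'rV[R]_d -> 'rV[R]_d -> R)
  (hMnn : forall x z, D x -> bdry D z -> 0 <= MD x z)
  (hMest : martin_estimate D MD)
  (Q : 'rV[R]_d) (mu : {finite_measure set BorelRd R d -> \bar R})
  (v : 'rV[R]_d -> R) (S : set 'rV[R]_d) (SD : S `<=` D) :
  (fun x => delta D x / v x) @ within S (nbhs Q) --> (0 : R) ->
   forall eps : R, 0 < eps ->
     (fun x => Rintegral mu
        ((bdry D `&` [set z | eps <= enorm (Q - z)]) : set (BorelRd R d)) (MD x)
               / v x) @ within S (nbhs Q) --> (0 : R).
Proof.
move=> hlim eps eps0.
have [c [c1 hc]] := hMest.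
have c0 : 0 < c by apply: lt_le_trans c1.
have dR0 : (0 : R) < d%:R by rewrite ltr0n; apply: leq_trans hd.
set r := eps / (2 * d%:R).
have r0 : 0 < r by rewrite divr_gt0 // mulr_gt0.
set m := fine (mu setT).
have m0 : 0 <= m by rewrite fine_ge0 // measure_ge0.
set K := c * r^-1 ^+ d * m.
have K0 : 0 <= K.
  apply: mulr_ge0 => //; apply: mulr_ge0; [exact: ltW | apply: exprn_ge0; rewrite invr_ge0; exact: ltW].
have hh : (fun x => K * `|delta D x / v x|) @ within S (nbhs Q) --> (0 : R).
  rewrite -(mulr0 K) -(@normr0 _ R); apply: cvgM; [exact: cvg_cst | exact: cvg_norm hlim].
apply: (squeeze_cvgr (f := fun x => - (K * `|delta D x / v x|)) _ _ hh); last first.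
  by rewrite -oppr0; apply: cvgN.
near=> x.
have [Sx xQ] : S x /\ `|Q - x| < r by near: x; exact: near_ball.
have Dx := SD _ Sx.
rewrite -ler_norml.
set A := (bdry D `&` [set z | eps <= enorm (Q - z)]) : set (BorelRd R d).
have hz : forall z : 'rV[R]_d, A z -> 0 <= MD x z <= c * `|delta D x| * r^-1 ^+ d.
  move=> z [bz ez]; rewrite hMnn //=.
  have rz : r <= enorm (x - z).
    apply: (le_trans _ (@norm_le_enorm R d (x - z))); apply/ltW.
    have h1 := @enorm_le R d (Q - z).
    have h2 := ler_distD x Q z.
    have h3 : eps / d%:R <= `|Q - z| by rewrite ler_pdivrMr // mulrC (le_trans ez).
    have h4 : eps / d%:R = r + r.
      rewrite /r -mulr2n -mulr_natr; field; exact/lt0r_neq0.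
    rewrite h4 in h3.
    lra.
  have en0 : 0 < enorm (x - z) ^+ d by rewrite exprn_gt0 // (lt_le_trans r0).
  apply: le_trans (proj2 (hc _ _ Dx bz)) _.
  have s1 : delta D x / enorm (x - z) ^+ d <= `|delta D x| / enorm (x - z) ^+ d.
    have hi : 0 <= (enorm (x - z) ^+ d)^-1 by rewrite invr_ge0 ltW.
    have := ler_wpM2r hi (real_ler_norm (num_real (delta D x))); exact.
  have s2 : `|delta D x| / enorm (x - z) ^+ d <= `|delta D x| * r^-1 ^+ d.
    have hl : (enorm (x - z) ^+ d)^-1 <= r^-1 ^+ d.
      rewrite exprVn lef_pV2 ?posrE ?exprn_gt0 //.
        by rewrite lerXn2r ?nnegrE ?(ltW r0) //; apply: le_trans (ltW r0) rz.
      exact: lt_le_trans r0 rz.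
    have := ler_wpM2l (normr_ge0 (delta D x)) hl; exact.
  rewrite -mulrA; have := ler_wpM2l (ltW c0) (le_trans s1 s2); exact.
have hK1 : 0 <= c * `|delta D x| * r^-1 ^+ d.
  apply: mulr_ge0; first by apply: mulr_ge0; [exact: ltW | exact: normr_ge0].
  by apply: exprn_ge0; rewrite invr_ge0; exact: ltW.
have /andP[I0 IK] := @Rint_bound _ _ _ mu A (MD x) _ hK1 hz.
rewrite !normrM !normfV (ger0_norm I0) mulrA.
have hv : 0 <= `|v x|^-1 by rewrite invr_ge0.
have e : K * `|delta D x| = c * `|delta D x| * r^-1 ^+ d * m by rewrite /K; ring.
rewrite e; have := ler_wpM2r hv IK; exact.
Unshelve. all: by end_near. Qed.

Theorem lemma3p3 (R : realType) (d : nat) (hd : (2 <= d)%N)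
  (D : set 'rV[R]_d) (r0 L0 : R) (hD : C11_open_set D r0 L0)
  (x0 : 'rV[R]_d) (hx0 : D x0)
  (MD : 'rV[R]_d -> 'rV[R]_d -> R)
  (hMnn : forall x z, D x -> bdry D z -> 0 <= MD x z)
  (hMx0 : forall z, bdry D z -> MD x0 z = 1)
  (hMmeas : forall x, D x -> measurable_fun (bdry D : set (BorelRd R d)) (MD x : BorelRd R d -> R))
  (hMest : martin_estimate D MD)
  (Q : 'rV[R]_d) (hQ : bdry D Q)
  (nu : {finite_measure set BorelRd R d -> \bar R})
  (v : 'rV[R]_d -> R)
  (hv : forall x, D x -> (v x)%:E = (\int[nu]_(z in (bdry D : set (BorelRd R d))) (MD x z)%:E)%E)
  (mu : {finite_measure set BorelRd R d -> \bar R}) :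
  ((fun x => delta D x / v x) @ within D (nbhs Q) --> (0 : R) ->
   forall eps : R, 0 < eps ->
     (fun x => Rintegral mu
        ((bdry D `&` [set z | eps <= enorm (Q - z)]) : set (BorelRd R d)) (MD x)
               / v x) @ within D (nbhs Q) --> (0 : R))
  /\
  ((forall beta : R, 1 < beta ->
      (fun x => delta D x / v x) @ within (ntregion D r0 Q beta) (nbhs Q)
        --> (0 : R)) ->
   forall eps : R, 0 < eps -> forall beta : R, 1 < beta ->
     (fun x => Rintegral mu
        ((bdry D `&` [set z | eps <= enorm (Q - z)]) : set (BorelRd R d)) (MD x)
               / v x) @ within (ntregion D r0 Q beta) (nbhs Q) --> (0 : R)).
Proof.
split.
  move=> h eps eps0.
  exact: (@key R d hd D MD hMnn hMest Q mu v D (fun x Dx => Dx) h eps eps0).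
move=> h eps eps0 beta b1.
apply: (@key R d hd D MD hMnn hMest Q mu v (ntregion D r0 Q beta) _ (h beta b1) eps eps0).
by move=> x [].
Qed.
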